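(* Let $M_1\in\mathbb{R}^{a\times d}$, $M_2\in\mathbb{R}^{b\times d}$, and let $\Psi_1:\mathbb{R}^s\to\mathbb{R}^{a\times s}$, $\Psi_2:\mathbb{R}^s\to\mathbb{R}^{b\times s}$ be arbitrary functions; set $\Phi_i(w)=\Psi_i(w)w$ for $i=1,2$. Let $X\in\mathbb{R}^d$, $w\in\mathbb{R}^s$, and $$Z_1=M_1X+\Phi_1(w),\qquad Z_2=M_2X+\Phi_2(w).$$ Let $L_1=\sup_{w'\in\mathbb{R}^s}\|\Psi_1(w')\|$, $L_2=\sup_{w'\in\mathbb{R}^s}\|\Psi_2(w')\|$ (assumed finite), and $\alpha=\inf_{w'\in\mathbb{R}^s}\sigma_{\min}\big((I-M_1M_1^+)\Psi_1(w')\big)$. Assume $\mathrm{Null}(M_1)\subseteq\mathrm{Null}(M_2)$. Then: (i) if $w=0$, then $\|Z_2\|\le\sigma_{\max}(M_2M_1^+)\|Z_1\|$; (ii) if $\alpha>0$, then $\|Z_2\|\le\big((1+L_1/\alpha)\,\sigma_{\max}(M_2M_1^+)+L_2/\alpha\big)\|Z_1\|$.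
   Context: $\|\cdot\|$ is the Euclidean norm on vectors and the induced operator (spectral) norm on matrices. For a matrix $M$, $\sigma_{\max}(M)=\max_{\|x\|=1}\|Mx\|$, $\sigma_{\min}(M)=\min_{\|x\|=1}\|Mx\|$ (which is zero if $M$ does not have full column rank), and $M^+$ is the Moore–Penrose pseudo-inverse. *)

(* Defs.v *)
From HB Require Import structures.
From mathcomp Require Import all_boot all_order all_algebra.
From mathcomp Require Import boolp classical_sets reals.
Set Implicit Arguments. Unset Strict Implicit. Unset Printing Implicit Defensive.
Import Order.TTheory GRing.Theory Num.Theory.
Local Open Scope ring_scope.
Local Open Scope classical_set_scope.

Section Defs.
Variable R : realType.

Definition vnorm (n : nat) (x : 'cV[R]_n) : R := Num.sqrt (\sum_i x i 0 ^+ 2).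

Definition smax (m n : nat) (M : 'M[R]_(m, n)) : R :=
  sup [set y | exists x : 'cV[R]_n, vnorm x = 1 /\ y = vnorm (M *m x)].

Definition smin (m n : nat) (M : 'M[R]_(m, n)) : R :=
  inf [set y | exists x : 'cV[R]_n, vnorm x = 1 /\ y = vnorm (M *m x)].

(* P is the Moore--Penrose pseudo-inverse of M (the four Penrose equations,
   which determine P uniquely) *)
Definition moore_penrose (m n : nat) (M : 'M[R]_(m, n)) (P : 'M[R]_(n, m)) : Prop :=
  [/\ M *m P *m M = M, P *m M *m P = P,
      (M *m P)^T = M *m P & (P *m M)^T = P *m M].

End Defs.

(* Main.v *)
Require Import Defs.
From HB Require Import structures.
From mathcomp Require Import all_boot all_order all_algebra.
From mathcomp Require Import boolp classical_sets reals.
From mathcomp Require Import ring lra.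
Import Order.TTheory GRing.Theory Num.Theory.
Local Open Scope ring_scope.
Local Open Scope classical_set_scope.
Set Implicit Arguments. Unset Strict Implicit.
Section S.
Variable R : realType.
Lemma cs (n:nat) (f g : 'I_n -> R) :
  (\sum_i f i * g i)^+2 <= (\sum_i f i ^+2) * (\sum_i g i ^+2).
Proof.
set A := \sum_i f i ^+2; set B := \sum_i g i ^+2; set C := \sum_i f i * g i.
have H0 : 0 <= \sum_i (B * f i - C * g i)^+2 by apply: sumr_ge0 => i _; exact: sqr_ge0.
have E : \sum_i (B * f i - C * g i)^+2 = B^+2*A - 2*B*C*C + C^+2*B.
  rewrite (eq_bigr (fun i => B^+2 * f i^+2 - (2*B*C) * (f i * g i) + C^+2 * g i ^+2)); last by move=> i _; ring.
  by rewrite !big_split /= sumrN -!mulr_sumr.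
have B0 : 0 <= B by apply: sumr_ge0 => i _; exact: sqr_ge0.
have A0 : 0 <= A by apply: sumr_ge0 => i _; exact: sqr_ge0.
rewrite E in H0.
case: (ltrgt0P B) B0 => // [Bp|Bz] _; first by nra.
have gz : forall i, g i = 0.
  move=> i; apply/eqP; rewrite -sqrf_eq0.
  have := Bz; rewrite /B => /eqP; rewrite psumr_eq0; last by move=> j _; exact: sqr_ge0.
  by move/allP/(_ i (mem_index_enum _)).
have -> : C = 0 by rewrite /C big1 // => i _; rewrite gz mulr0.
by rewrite expr2 mul0r Bz mulr0.
Qed.
Lemma vnorm_ge0 n (x : 'cV[R]_n) : 0 <= vnorm x.
Proof. exact: sqrtr_ge0. Qed.

Lemma sumsq_ge0 n (x : 'cV[R]_n) : 0 <= \sum_i x i 0 ^+ 2.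
Proof. by apply: sumr_ge0 => i _; exact: sqr_ge0. Qed.

Lemma vnormZ n c (x : 'cV[R]_n) : vnorm (c *: x) = `|c| * vnorm x.
Proof.
rewrite /vnorm (eq_bigr (fun i => c ^+ 2 * x i 0 ^+ 2)); last first.
  by move=> i _; rewrite mxE exprMn.
by rewrite -mulr_sumr sqrtrM ?sqr_ge0 // sqrtr_sqr.
Qed.

Lemma vnormN n (x : 'cV[R]_n) : vnorm (- x) = vnorm x.
Proof. by rewrite -scaleN1r vnormZ normrN normr1 mul1r. Qed.

Lemma vnorm_eq0 n (x : 'cV[R]_n) : vnorm x = 0 -> x = 0.
Proof.
move=> /eqP; rewrite /vnorm sqrtr_eq0 => H.
have Hs : \sum_i x i 0 ^+ 2 == 0 by rewrite eq_le H sumsq_ge0.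
move: Hs; rewrite psumr_eq0; last by move=> j _; exact: sqr_ge0.
move/allP => Hall; apply/matrixP => i j; rewrite (ord1 j) mxE.
by apply/eqP; rewrite -sqrf_eq0; exact: (implyP (Hall i (mem_index_enum _))).
Qed.

Lemma vnormD n (x y : 'cV[R]_n) : vnorm (x + y) <= vnorm x + vnorm y.
Proof.
have cs' := cs (fun i => x i 0) (fun i => y i 0).
set A := \sum_i x i 0 ^+ 2 in cs'; set B := \sum_i y i 0 ^+ 2 in cs'.
set C := \sum_i x i 0 * y i 0 in cs'.
have E : \sum_i (x + y) i 0 ^+ 2 = A + 2 * C + B.
  rewrite (eq_bigr (fun i => x i 0 ^+ 2 + 2 * (x i 0 * y i 0) + y i 0 ^+ 2)); last first.
    by move=> i _; rewrite mxE; ring.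
  by rewrite !big_split /= -mulr_sumr.
have A0 : 0 <= A := sumsq_ge0 x. have B0 : 0 <= B := sumsq_ge0 y.
have hA : vnorm x ^+ 2 = A by rewrite /vnorm sqr_sqrtr.
have hB : vnorm y ^+ 2 = B by rewrite /vnorm sqr_sqrtr.
have nx := vnorm_ge0 x; have ny := vnorm_ge0 y.
have hC : C <= vnorm x * vnorm y.
  have : C ^+ 2 <= (vnorm x * vnorm y) ^+ 2 by rewrite exprMn hA hB.
  move=> h; have := mulr_ge0 nx ny; nra.
rewrite -[X in _ <= X]ger0_norm ?addr_ge0 // -sqrtr_sqr /vnorm E ler_sqrt ?sqr_ge0 //.
rewrite -/(vnorm x) -/(vnorm y); nra.
Qed.
Lemma mul_bound m n (M : 'M[R]_(m, n)) :
  exists K, forall x : 'cV[R]_n, vnorm (M *m x) <= K * vnorm x.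
Proof.
exists (Num.sqrt (\sum_i \sum_j M i j ^+ 2)) => x.
rewrite /vnorm -sqrtrM; last by apply: sumr_ge0 => i _; apply: sumr_ge0 => j _; exact: sqr_ge0.
rewrite ler_sqrt; last by apply: mulr_ge0; [apply: sumr_ge0 => i _; apply: sumr_ge0 => j _; exact: sqr_ge0| exact: sumsq_ge0].
rewrite mulr_suml; apply: ler_sum => i _; rewrite mxE.
exact: (cs (fun j => M i j) (fun j => x j 0)).
Qed.

Lemma normalize n (x : 'cV[R]_n) : 0 < vnorm x ->
  vnorm ((vnorm x)^-1 *: x) = 1.
Proof.
move=> h; rewrite vnormZ ger0_norm ?invr_ge0 ?ltW //.
by rewrite mulVf // gt_eqF.
Qed.

Lemma smax_ge0 m n (M : 'M[R]_(m, n)) : 0 <= smax M.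
Proof.
rewrite /smax; case: (pselect (exists x : 'cV[R]_n, vnorm x = 1)) => [[x hx]|nx].
  have [K hK] := mul_bound M.
  have ub : has_ubound [set y | exists x : 'cV[R]_n, vnorm x = 1 /\ y = vnorm (M *m x)].
    by exists K => y [z [hz ->]]; have := hK z; rewrite hz mulr1.
  apply: (le_trans (vnorm_ge0 (M *m x))); apply: (ub_le_sup ub).
  by exists x.
have -> : [set y | exists x : 'cV[R]_n, vnorm x = 1 /\ y = vnorm (M *m x)] = set0.
  by apply/seteqP; split => y //= [z [hz _]]; exfalso; apply: nx; exists z.
by rewrite sup0.
Qed.

Lemma smax_bound m n (M : 'M[R]_(m, n)) x : vnorm (M *m x) <= smax M * vnorm x.
Proof.
have := vnorm_ge0 x; rewrite le_eqVlt => /orP[/eqP h|h].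
  by rewrite -h (vnorm_eq0 (esym h)) mulmx0 mulr0 /vnorm big1 ?sqrtr0 // => i _; rewrite mxE expr2 mul0r.
have [K hK] := mul_bound M.
have ub : has_ubound [set y | exists x : 'cV[R]_n, vnorm x = 1 /\ y = vnorm (M *m x)].
  by exists K => y [z [hz ->]]; have := hK z; rewrite hz mulr1.
have H := ub_le_sup ub (ex_intro _ _ (conj (normalize h) erefl)).
rewrite -/(smax M) in H.
rewrite -scalemxAr vnormZ ger0_norm in H; last by rewrite invr_ge0 ltW.
by rewrite mulrC ler_pdivrMr in H.
Qed.

Lemma smin_ge0 m n (M : 'M[R]_(m, n)) : 0 <= smin M.
Proof.
rewrite /smin; case: (pselect (exists x : 'cV[R]_n, vnorm x = 1)) => [[x hx]|nx].
  apply: lb_le_inf; first by exists (vnorm (M *m x)); exists x.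
  by move=> y [z [_ ->]]; exact: vnorm_ge0.
have -> : [set y | exists x : 'cV[R]_n, vnorm x = 1 /\ y = vnorm (M *m x)] = set0.
  by apply/seteqP; split => y //= [z [hz _]]; exfalso; apply: nx; exists z.
by rewrite inf0.
Qed.

Lemma smin_bound m n (M : 'M[R]_(m, n)) x : smin M * vnorm x <= vnorm (M *m x).
Proof.
have := vnorm_ge0 x; rewrite le_eqVlt => /orP[/eqP h|h].
  by rewrite -h mulr0 vnorm_ge0.
have lb : has_lbound [set y | exists x : 'cV[R]_n, vnorm x = 1 /\ y = vnorm (M *m x)].
  by exists 0 => y [z [_ ->]]; exact: vnorm_ge0.
have := ge_inf lb (ex_intro _ _ (conj (normalize h) erefl)).
rewrite -/(smin M) -scalemxAr vnormZ ger0_norm; last by rewrite invr_ge0 ltW.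
by rewrite mulrC -ler_pdivlMr // mulrC.
Qed.
Lemma sq_tr n (x : 'cV[R]_n) : \sum_i x i 0 ^+ 2 = (x^T *m x) 0 0.
Proof. by rewrite mxE; apply: eq_bigr => i _; rewrite mxE expr2. Qed.

Lemma proj_bound n (P : 'M[R]_n) (v : 'cV[R]_n) :
  P^T = P -> P *m P = P -> vnorm (P *m v) <= vnorm v.
Proof.
move=> hT hI; rewrite /vnorm ler_sqrt ?sumsq_ge0 // !sq_tr.
set u := P *m v; set r := v - u.
have hv : v = u + r by rewrite /r addrC subrK.
have c1 : u^T *m r = 0.
  by rewrite /r /u trmx_mul hT mulmxBr -!mulmxA (mulmxA P P) hI subrr.
have c2 : r^T *m u = 0.
  rewrite /r /u linearB /= trmx_mul hT mulmxBl -!mulmxA (mulmxA P P) hI subrr //.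
have tD : (u + r)^T = u^T + r^T by apply/matrixP => i j; rewrite !mxE.
clearbody u r; rewrite [in X in _ <= X]hv tD mulmxDl !mulmxDr c1 c2 addr0 add0r !mxE.
rewrite lerDl; apply: sumr_ge0 => j _; rewrite mxE -expr2; exact: sqr_ge0.
Qed.
End S.
Unset Implicit Arguments. Set Strict Implicit.
Theorem lemma3 (R : realType) (a b d s : nat)
  (M1 : 'M[R]_(a, d)) (M2 : 'M[R]_(b, d)) (M1p : 'M[R]_(d, a))
  (Psi1 : 'cV[R]_s -> 'M[R]_(a, s)) (Psi2 : 'cV[R]_s -> 'M[R]_(b, s))
  (X : 'cV[R]_d) (w : 'cV[R]_s) :
  moore_penrose M1 M1p ->
  has_ubound [set y | exists w' : 'cV[R]_s, y = smax (Psi1 w')] ->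
  has_ubound [set y | exists w' : 'cV[R]_s, y = smax (Psi2 w')] ->
  (forall x : 'cV[R]_d, M1 *m x = 0 -> M2 *m x = 0) ->
  let Z1 := M1 *m X + Psi1 w *m w in
  let Z2 := M2 *m X + Psi2 w *m w in
  let L1 := sup [set y | exists w' : 'cV[R]_s, y = smax (Psi1 w')] in
  let L2 := sup [set y | exists w' : 'cV[R]_s, y = smax (Psi2 w')] in
  let alpha := inf [set y | exists w' : 'cV[R]_s,
                       y = smin ((1%:M - M1 *m M1p) *m Psi1 w')] in
  (w = 0 -> vnorm Z2 <= smax (M2 *m M1p) * vnorm Z1) /\
  (0 < alpha ->
     vnorm Z2 <= ((1 + L1 / alpha) * smax (M2 *m M1p) + L2 / alpha) * vnorm Z1).
Proof.
move=> [pe1 pe2 pe3 pe4] hub1 hub2 hnull Z1 Z2 L1 L2 alpha.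
have hM2 : M2 *m X = (M2 *m M1p) *m (M1 *m X).
  have := hnull (X - M1p *m (M1 *m X)).
  rewrite mulmxBr !mulmxA pe1 subrr => /(_ erefl) /eqP.
  by rewrite mulmxBr subr_eq0 !mulmxA => /eqP.
split.
  move=> w0; rewrite /Z2 /Z1 w0 !mulmx0 !addr0 hM2; exact: smax_bound.
move=> apos.
set N := M2 *m M1p; set c := smax N.
set P := 1%:M - M1 *m M1p.
have PM1 : P *m M1 = 0 by rewrite /P mulmxBl mul1mx pe1 subrr.
have PZ1 : P *m Z1 = P *m Psi1 w *m w.
  by rewrite /Z1 mulmxDr mulmxA PM1 mul0mx add0r mulmxA.
have hP : vnorm (P *m Z1) <= vnorm Z1.
  apply: proj_bound.
    by rewrite /P linearB /= trmx1 pe3.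
  by rewrite /P mulmxBl mul1mx mulmxBr mulmx1 !mulmxA pe1 subrr subr0.
have a_le : alpha <= smin (P *m Psi1 w).
  apply: ge_inf; last by exists w.
  by exists 0 => y [w' ->]; exact: smin_ge0.
have hw : alpha * vnorm w <= vnorm Z1.
  apply: le_trans hP; rewrite PZ1; apply: le_trans (smin_bound _ _).
  by apply: ler_wpM2r; [exact: vnorm_ge0 | exact: a_le].
have L1ge : smax (Psi1 w) <= L1 by apply: (ub_le_sup hub1); exists w.
have L2ge : smax (Psi2 w) <= L2 by apply: (ub_le_sup hub2); exists w.
have nw : vnorm w <= vnorm Z1 / alpha by rewrite ler_pdivlMr // mulrC.
have h1 : vnorm (Psi1 w *m w) <= L1 * vnorm w :=
  le_trans (smax_bound _ _) (ler_wpM2r (vnorm_ge0 w) L1ge).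
have h2 : vnorm (Psi2 w *m w) <= L2 * vnorm w :=
  le_trans (smax_bound _ _) (ler_wpM2r (vnorm_ge0 w) L2ge).
have hM1X : vnorm (M1 *m X) <= vnorm Z1 + L1 * vnorm w.
  have -> : M1 *m X = Z1 + - (Psi1 w *m w) by rewrite /Z1 addrK.
  by apply: le_trans (vnormD _ _) _; rewrite vnormN lerD2l h1.
have hZ2 : vnorm Z2 <= c * (vnorm Z1 + L1 * vnorm w) + L2 * vnorm w.
  rewrite /Z2 hM2; apply: le_trans (vnormD _ _) _; apply: lerD h2.
  exact: le_trans (smax_bound N _) (ler_wpM2l (smax_ge0 N) hM1X).
have c0 : 0 <= c := smax_ge0 N.
have L10 : 0 <= L1 := le_trans (smax_ge0 _) L1ge.
have L20 : 0 <= L2 := le_trans (smax_ge0 _) L2ge.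
apply: le_trans hZ2 _.
have -> : ((1 + L1 / alpha) * c + L2 / alpha) * vnorm Z1 =
   c * (vnorm Z1 + L1 * (vnorm Z1 / alpha)) + L2 * (vnorm Z1 / alpha) by ring.
apply: lerD; last exact: ler_wpM2l.
apply: ler_wpM2l => //; rewrite lerD2l; exact: ler_wpM2l.
Qed.
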